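(* For any pair $(n,k)\in\mathbb{N}\times\mathbb{N}$: (a) if $(n,k)$ is extremely good, then the greedy algorithm is completely universally optimal on $(n,k)$; (b) if $(n,k)$ is good, then the greedy algorithm is universally optimal on $(n,k)$.
   Context: All graphs are undirected and unweighted. For a graph $G=(V,E)$ and integer $k$, a $k$-spanner of $G$ is a subgraph $H=(V,E')$, $E'\subseteq E$, with $\mathrm{dist}_H(u,v)\le k\cdot\mathrm{dist}_G(u,v)$ for all $u,v\in V$. A minimum $k$-spanner is a $k$-spanner with the fewest edges. Girth = length of a shortest cycle ($+\infty$ if acyclic). The greedy algorithm on input $\langle G,k\rangle$ with total ordering $\sigma$ of $E$ starts from $H=(V,\emptyset)$ and processes edges in order $\sigma$, adding edge $(u,v)$ iff the current $\mathrm{dist}_H(u,v)>k$, and outputs the final $H$. A pair $(n,k)$ is extremely good if for every $n$-vertex graph all of its minimum $k$-spanners have girth at least $k+2$; good if for every $n$-vertex graph at least one of its minimum $k$-spanners has girth at least $k+2$. The greedy algorithm is completely universally optimal on $(n,k)$ if for every $n$-vertex graph $G$, every minimum $k$-spanner of $G$ is output by the greedy algorithm on input $\langle G,k\rangle$ for some edge ordering $\sigma$; it is universally optimal on $(n,k)$ if for every $n$-vertex graph $G$ some minimum $k$-spanner of $G$ is output by the greedy algorithm for some edge ordering $\sigma$. *)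

(* Defs.v *)
From mathcomp Require Import all_boot.
Set Implicit Arguments. Unset Strict Implicit. Unset Printing Implicit Defensive.

Section Spanners.
Variable n : nat.
Notation V := 'I_n.
(* An (undirected, simple) graph on V is given by its edge set: a set of
   unordered pairs, each a 2-element subset of V. *)
Definition graph := {set {set V}}.

Definition simple_graph (E : graph) : Prop := forall e, e \in E -> #|e| = 2.

Definition adj (E : graph) : rel V := fun x y => [set x; y] \in E.

Definition walkb (E : graph) (u v : V) (m : nat) : bool :=
  [exists t : m.-tuple V, path (adj E) u t && (last u t == v)].

(* dist_E(u,v) <= m  (false when v is unreachable from u) *)
Definition dist_le (E : graph) (u v : V) (m : nat) : bool :=
  [exists j : 'I_m.+1, walkb E u v j].

Definition is_spanner (k : nat) (G H : graph) : Prop :=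
  H \subset G /\
  forall (u v : V) (d : nat), dist_le G u v d -> dist_le H u v (k * d).

Definition min_spanner (k : nat) (G H : graph) : Prop :=
  is_spanner k G H /\ forall H', is_spanner k G H' -> #|H| <= #|H'|.

(* girth(H) >= g : every cycle (sequence of >= 3 distinct vertices,
   cyclically adjacent) has length >= g; vacuous if H is acyclic *)
Definition girth_ge (H : graph) (g : nat) : Prop :=
  forall p : seq V, uniq p -> 3 <= size p -> cycle (adj H) p -> g <= size p.

Definition far (k : nat) (H : graph) (e : {set V}) : bool :=
  [exists u, exists v, [&& u != v, e == [set u; v] & ~~ dist_le H u v k]].

Definition greedy (k : nat) (sigma : seq {set V}) : graph :=
  foldl (fun H e => if far k H e then e |: H else H) set0 sigma.

Definition edge_ordering (E : graph) (sigma : seq {set V}) : Prop :=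
  perm_eq sigma (enum E).

End Spanners.

Definition extremely_good (n k : nat) : Prop :=
  forall G : graph n, simple_graph G ->
  forall H, min_spanner k G H -> girth_ge H k.+2.

Definition good (n k : nat) : Prop :=
  forall G : graph n, simple_graph G ->
  exists H, min_spanner k G H /\ girth_ge H k.+2.

Definition greedy_completely_universally_optimal (n k : nat) : Prop :=
  forall G : graph n, simple_graph G ->
  forall H, min_spanner k G H ->
  exists sigma, edge_ordering G sigma /\ greedy k sigma = H.

Definition greedy_universally_optimal (n k : nat) : Prop :=
  forall G : graph n, simple_graph G ->
  exists H, min_spanner k G H /\
  exists sigma, edge_ordering G sigma /\ greedy k sigma = H.

(* Main.v *)
Require Import Defs.
From mathcomp Require Import all_boot.
Set Implicit Arguments. Unset Strict Implicit. Unset Printing Implicit Defensive.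

Section Aux.
Variable n : nat.
Implicit Types (G H A : graph n).

Lemma far_H k G H A e : simple_graph G -> H \subset G -> girth_ge H k.+2 ->
  A \subset H -> e \in H -> e \notin A -> far k A e.
Proof.
move=> sG HG gH AH eH eA.
have /cards2P [u [v [uv De]]] : #|e| == 2 by rewrite sG // (subsetP HG).
apply/existsP; exists u; apply/existsP; exists v; rewrite uv De eqxx /=.
apply/negP => /existsP [j /existsP [t /andP [pt /eqP lt]]].
case: (shortenP pt) lt => p' pp' up' sp' lp'.
have szp : size p' <= k.
  apply: leq_trans (uniq_leq_size (andP up').2 sp') _.
  by rewrite size_tuple -ltnS ltn_ord.
have pH : path (adj H) u p'.
  by apply: sub_path pp' => x y; rewrite /adj => /(subsetP AH).
have cyc : cycle (adj H) (u :: p').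
  rewrite /= rcons_path pH /= lp' /adj setUC -De; exact: eH.
case: p' pp' up' sp' lp' szp pH cyc => [|w [|w2 q]] pp' up' sp' lp' szp pH cyc.
- by rewrite /= in lp'; rewrite lp' eqxx in uv.
- move: pp' => /= /andP [a _]; move: a; rewrite /= in lp'.
  by rewrite /adj lp' -De (negbTE eA).
- have := gH _ up' isT cyc; rewrite /= !ltnS => h.
  by move: (leq_trans szp h); rewrite /= ltnn.
Qed.

Lemma greedy_H k G H : simple_graph G -> H \subset G -> girth_ge H k.+2 ->
  forall s A, uniq s -> {subset s <= H} -> A \subset H ->
  (forall x, x \in s -> x \notin A) ->
  foldl (fun H e => if far k H e then e |: H else H) A s = A :|: [set x in s].
Proof.
move=> sG HG gH; elim => [|x s IH] A us sH AH dA /=.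
  by apply/setP => y; rewrite !inE orbF.
have xH : x \in H by apply: sH; rewrite inE eqxx.
rewrite (far_H sG HG gH AH xH (dA x (mem_head _ _))).
case/andP: us => xs us.
rewrite IH //.
- by apply/setP => y; rewrite !inE orbA (orbC (y == x)).
- by move=> y ys; apply: sH; rewrite inE ys orbT.
- by apply/subsetP => y; rewrite !inE => /orP [/eqP -> //|]; apply/subsetP.
- move=> y ys; rewrite inE negb_or dA ?inE ?ys ?orbT // andbT.
  by apply: contraNneq xs => <-.
Qed.

Lemma greedy_rest k G H : is_spanner k G H ->
  forall s, {subset s <= G} ->
  foldl (fun H e => if far k H e then e |: H else H) H s = H.
Proof.
move=> [HG sp]; elim => [|x s IH] sG //=.
have -> : far k H x = false.
  apply/negbTE/negP => /existsP [u /existsP [v /and3P [uv /eqP De nd]]].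
  move/negP: nd; apply; rewrite -(muln1 k); apply: sp.
  apply/existsP; exists ord_max; apply/existsP; exists [tuple v] => /=.
  by rewrite andbT eqxx andbT /adj -De sG // mem_head.
by apply: IH => y ys; apply: sG; rewrite inE ys orbT.
Qed.

Lemma key k G H : simple_graph G -> is_spanner k G H -> girth_ge H k.+2 ->
  exists sigma, edge_ordering G sigma /\ greedy k sigma = H.
Proof.
move=> sG spH gH; have HG := spH.1.
exists (enum H ++ enum (G :\: H)); split.
  apply: uniq_perm; rewrite ?enum_uniq //.
    rewrite cat_uniq !enum_uniq /= andbT; apply/hasPn => x.
    by rewrite mem_enum inE mem_enum => /andP [].
  move=> x; rewrite mem_cat !mem_enum inE.
  by case: (boolP (x \in H)) => //= /(subsetP HG) ->.
rewrite /greedy foldl_cat (@greedy_H _ _ _ sG HG gH (enum H) set0) ?enum_uniq ?sub0set //.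
- have -> : [set x in enum H] = H by apply/setP => x; rewrite !inE mem_enum.
  rewrite set0U.
  apply: (greedy_rest spH) => x; rewrite mem_enum inE => /andP [] //.
- by move=> y; rewrite mem_enum.
- by move=> y; rewrite inE.
Qed.
End Aux.

Theorem corollary1p5 (n k : nat) :
  (extremely_good n k -> greedy_completely_universally_optimal n k) /\
  (good n k -> greedy_universally_optimal n k).
Proof.
split.
- move=> eg G sG H mH; exact: (key sG mH.1 (eg G sG H mH)).
- move=> g G sG; have [H [mH gH]] := g G sG.
  exists H; split => //; exact: (key sG mH.1 gH).
Qed.
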